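(* Let $\mu>0$, $k>0$, $y(x)=-kx^2$, and let $x_p$, $m(x)$ and $N(x,\xi)$ be as in the context. Then $\partial_\xi N(x,\xi)<0$ for every $x\in(0,x_p)$ and every $\xi\in(0,1)$.
   Context: Let $g(u)=u^2(1-u)$ and $G(u)=u^3/3-u^4/4$ for $u\in[0,1]$. If $k^2\le\mu/6$ set $x_p=1$; otherwise let $x_p\in(0,1)$ be the unique $x\in(0,1)$ with $y(x)^2=2\mu G(x)$. For $x\in(0,x_p)$, $m(x)\in(0,x)$ is the unique number with $2\mu G(m(x))=2\mu G(x)-y(x)^2$; $m$ is $\mathcal{C}^1$. Define, for $x\in(0,x_p)$ and $\xi\in[0,1]$, writing $z=x-(x-m(x))\xi$, $$N(x,\xi)=(1-m'(x))\bigl(y(x)^2+2\mu(G(z)-G(x))\bigr)-(x-m(x))\Bigl(y(x)y'(x)+\mu\bigl(g(z)\,(1-(1-m'(x))\xi)-g(x)\bigr)\Bigr).$$ *)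

(* Defs.v *)
From Stdlib Require Import Reals.
From Coquelicot Require Import Coquelicot.
Open Scope R_scope.

Definition g (u : R) : R := u ^ 2 * (1 - u).
Definition G (u : R) : R := u ^ 3 / 3 - u ^ 4 / 4.

Definition yk (k : R) (x : R) : R := - k * x ^ 2.

Definition is_xp (mu : R) (y : R -> R) (k xp : R) : Prop :=
  (k ^ 2 <= mu / 6 -> xp = 1) /\
  (mu / 6 < k ^ 2 -> 0 < xp < 1 /\ (y xp) ^ 2 = 2 * mu * G xp).

Definition is_m (mu : R) (y : R -> R) (xp : R) (m : R -> R) : Prop :=
  forall x, 0 < x < xp ->
    (0 < m x < x /\ 2 * mu * G (m x) = 2 * mu * G x - (y x) ^ 2) /\
    ex_derive m x /\ continuous (Derive m) x.

Definition Nxi (mu : R) (y m : R -> R) (x xi : R) : R :=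
  let z := x - (x - m x) * xi in
  let m' := Derive m x in
  let y' := Derive y x in
  (1 - m') * ((y x) ^ 2 + 2 * mu * (G z - G x))
  - (x - m x) * ((y x) * y' + mu * (g z * (1 - (1 - m') * xi) - g x)).

(* Main.v *)
Require Import Defs.
From Stdlib Require Import Reals Lra Psatz.
From Coquelicot Require Import Coquelicot.
Open Scope R_scope.

Lemma Hpos (m p q r : R) : 0 < m -> 0 < p -> 0 < q -> 0 < r ->
  0 < 2*q^3*r^2 + 4*q^4*r^1 + 2*q^5 + 5*p^1*q^2*r^2 + 11*p^1*q^3*r^1 + 6*p^1*q^4 + 4*p^2*q^1*r^2 + 11*p^2*q^2*r^1 + 6*p^2*q^3 + 1*p^3*r^2 + 5*p^3*q^1*r^1 + 2*p^3*q^2 + 1*p^4*r^1 + 7*m^1*q^2*r^2 + 15*m^1*q^3*r^1 + 8*m^1*q^4 + 11*m^1*p^1*q^1*r^2 + 29*m^1*p^1*q^2*r^1 + 16*m^1*p^1*q^3 + 4*m^1*p^2*r^2 + 19*m^1*p^2*q^1*r^1 + 8*m^1*p^2*q^2 + 5*m^1*p^3*r^1 + 9*m^2*q^1*r^2 + 22*m^2*q^2*r^1 + 12*m^2*q^3 + 3*m^2*p^1*r^2 + 20*m^2*p^1*q^1*r^1 + 9*m^2*p^1*q^2 + 10*m^2*p^2*r^1 + 3*m^2*p^3 + 6*m^3*q^1*r^1 + 3*m^3*q^2 + 12*m^3*p^1*r^1 + 3*m^3*p^1*q^1 + 6*m^3*p^2 + 6*m^4*r^1 + 3*m^4*q^1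 + 3*m^4*p^1.
Proof.
  intros Hm Hp Hq Hr.
  repeat (apply Rplus_lt_0_compat || apply Rmult_lt_0_compat || apply pow_lt); lra.
Qed.

Lemma Tpos (M z x : R) : 0 < M -> M < z -> z < x -> x < 1 ->
  let S := x^2+x*M+4*M^2-3*M^3 in
  S*z*(1-z) - (2-3*z)*(3*x*M^2*(1-M) - S*(x-z)) > 0.
Proof.
  intros H1 H2 H3 H4 S. unfold S.
  pose proof (Hpos M (z - M) (x - z) (1 - x) H1 ltac:(lra) ltac:(lra) ltac:(lra)) as HP.
  match goal with |- ?A > 0 => replace A with
   (2*(x-z)^3*(1-x)^2 + 4*(x-z)^4*(1-x)^1 + 2*(x-z)^5 + 5*(z-M)^1*(x-z)^2*(1-x)^2 + 11*(z-M)^1*(x-z)^3*(1-x)^1 + 6*(z-M)^1*(x-z)^4 + 4*(z-M)^2*(x-z)^1*(1-x)^2 + 11*(z-M)^2*(x-z)^2*(1-x)^1 + 6*(z-M)^2*(x-z)^3 + 1*(z-M)^3*(1-x)^2 + 5*(z-M)^3*(x-z)^1*(1-x)^1 + 2*(z-M)^3*(x-z)^2 + 1*(z-M)^4*(1-x)^1 + 7*M^1*(x-z)^2*(1-x)^2 + 15*M^1*(x-z)^3*(1-x)^1 + 8*M^1*(x-z)^4 + 11*M^1*(z-M)^1*(x-z)^1*(1-x)^2 + 29*M^1*(z-M)^1*(x-z)^2*(1-x)^1 + 16*M^1*(z-M)^1*(x-z)^3 + 4*M^1*(z-M)^2*(1-x)^2 + 19*M^1*(z-M)^2*(x-z)^1*(1-x)^1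 + 8*M^1*(z-M)^2*(x-z)^2 + 5*M^1*(z-M)^3*(1-x)^1 + 9*M^2*(x-z)^1*(1-x)^2 + 22*M^2*(x-z)^2*(1-x)^1 + 12*M^2*(x-z)^3 + 3*M^2*(z-M)^1*(1-x)^2 + 20*M^2*(z-M)^1*(x-z)^1*(1-x)^1 + 9*M^2*(z-M)^1*(x-z)^2 + 10*M^2*(z-M)^2*(1-x)^1 + 3*M^2*(z-M)^3 + 6*M^3*(x-z)^1*(1-x)^1 + 3*M^3*(x-z)^2 + 12*M^3*(z-M)^1*(1-x)^1 + 3*M^3*(z-M)^1*(x-z)^1 + 6*M^3*(z-M)^2 + 6*M^4*(1-x)^1 + 3*M^4*(x-z)^1 + 3*M^4*(z-M)^1) by ring end.
  lra.
Qed.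

Theorem lemmaA1 (mu k xp : R) (m : R -> R) :
  0 < mu -> 0 < k ->
  is_xp mu (yk k) k xp ->
  is_m mu (yk k) xp m ->
  forall x xi, 0 < x < xp -> 0 < xi < 1 ->
    Derive (fun t => Nxi mu (yk k) m x t) xi < 0.
Proof.
  intros Hmu Hk [Hxp1 Hxp2] Hm x xi Hx Hxi.
  assert (Hxp : xp <= 1).
  { destruct (Rle_or_lt (k^2) (mu/6)) as [h|h].
    - rewrite (Hxp1 h); lra.
    - destruct (Hxp2 h) as [[_ h'] _]; lra. }
  destruct (Hm x Hx) as [[[HM1 HM2] E2] [Hex _]].
  assert (Hloc : locally x (fun t => 0 < t < xp)).
  { assert (He : 0 < Rmin x (xp - x)) by (apply Rmin_pos; lra).
    exists (mkposreal _ He). intros t Ht. cbn in Ht. unfold ball in Ht; cbn in Ht.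
    unfold AbsRing_ball, abs, minus, plus, opp in Ht; cbn in Ht.
    pose proof (Rmin_l x (xp-x)). pose proof (Rmin_r x (xp-x)).
    apply Rabs_def2 in Ht. lra. }
  assert (D1 : is_derive (fun t => 2*mu*G (m t)) x (2*mu*g (m x) * Derive m x)).
  { unfold G, g. auto_derive. auto. change (fun x0 : R => m x0) with m. field. }
  assert (D2 : is_derive (fun t => 2*mu*G (m t)) x (2*mu*g x - 4*k^2*x^3)).
  { apply (is_derive_ext_loc (fun t => 2 * mu * G t - (yk k t) ^ 2)).
    - apply (filter_imp (fun t => 0 < t < xp)); [|exact Hloc].
      intros t Ht. destruct (Hm t Ht) as [[_ E] _]. symmetry; exact E.
    - unfold G, g, yk. auto_derive. auto. field. }
  pose proof (is_derive_unique _ _ _ D1) as U1.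
  rewrite (is_derive_unique _ _ _ D2) in U1.
  assert (Dy : Derive (yk k) x = -2*k*x).
  { apply is_derive_unique. unfold yk. auto_derive. auto. ring. }
  set (M := m x) in *. set (mp := Derive m x) in *.
  set (d := x - M).
  assert (DN : is_derive (fun t => Nxi mu (yk k) m x t) xi
     (mu * d * (d * (2*(x - d*xi) - 3*(x-d*xi)^2) * (1 - (1-mp)*xi) - (1-mp) * g (x - d*xi)))).
  { unfold Nxi. fold M mp. rewrite Dy. unfold d, G, g, yk. auto_derive. auto. field. }
  match goal with |- Derive ?f xi < 0 =>
    replace (Derive f xi) with (mu * d * (d * (2*(x - d*xi) - 3*(x-d*xi)^2) * (1 - (1-mp)*xi) - (1-mp) * g (x - d*xi)))
    by (symmetry; apply is_derive_unique; exact DN) end.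
  set (z := x - d*xi).
  assert (Hz1 : M < z) by (unfold z, d; nra).
  assert (Hz2 : z < x) by (unfold z, d; nra).
  set (S := x^2+x*M+4*M^2-3*M^3).
  pose proof (Tpos M z x HM1 Hz1 Hz2 ltac:(lra)) as HT. fold S in HT.
  set (W := mu * g M * (1 - mp)).
  assert (HW : 3*x*W = mu*d*S).
  { assert (Ek : k^2*x^4 = 2*mu*G x - 2*mu*G M).
    { replace (k^2*x^4) with ((yk k x)^2) by (unfold yk; ring). lra. }
    assert (EW : W = mu*(g M - g x) + 2*k^2*x^3).
    { unfold W. rewrite Rmult_minus_distr_l, Rmult_1_r.
      replace (mu * g M * mp) with ((2 * mu * g M * mp)/2) by field.
      rewrite <- U1. field. }
    rewrite EW.
    replace (3 * x * (mu * (g M - g x) + 2 * k ^ 2 * x ^ 3))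
      with (3 * x * mu * (g M - g x) + 6 * (k ^ 2 * x ^ 4)) by ring.
    rewrite Ek. unfold S, d, g, G. field. }
  set (h := d * (2 * z - 3 * z ^ 2) * (1 - (1 - mp) * xi) - (1 - mp) * g z).
  assert (Hh : 3*x*(mu*g M*h) = - mu * d * z * (S*z*(1-z) - (2-3*z)*(3*x*M^2*(1-M) - S*(x-z)))).
  { replace (3*x*(mu*g M*h)) with
       (3*x*d*(2*z - 3*z^2)*mu*g M - (3*x*W)*(d*(2*z-3*z^2)*xi + g z))
      by (unfold h, W; ring).
    rewrite HW. unfold z, g. ring. }
  assert (HgM : 0 < g M) by (unfold g; apply Rmult_lt_0_compat; nra).
  assert (Hd : 0 < d) by (unfold d; lra).
  assert (Hzp : 0 < z) by lra.
  assert (Hneg : mu * g M * h < 0).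
  { apply (Rmult_lt_reg_l (3*x)); [lra|]. rewrite Hh, Rmult_0_r.
    assert (0 < mu*d*z*(S * z * (1 - z) - (2 - 3 * z) * (3 * x * M ^ 2 * (1 - M) - S * (x - z)))).
    { repeat apply Rmult_lt_0_compat; lra. }
    lra. }
  assert (h < 0).
  { destruct (Rlt_or_le h 0) as [?|Hh0]; auto.
    exfalso. assert (0 <= mu * g M * h) by (apply Rmult_le_pos; [apply Rmult_le_pos|]; lra). lra. }
  fold z. change (mu * d * h < 0).
  assert (0 < mu * d) by (apply Rmult_lt_0_compat; lra).
  nra.
Qed.
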